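(* For all $b\in(0,\pi/2)$, $\pi^2\frac{I_1(b)}{I_2(b)^3}<2$, where $I_1(b)=\int_{-b}^{b}\frac{\cos^5\varphi}{\sqrt{\cos^4\varphi-\cos^4b}}\,d\varphi$ and $I_2(b)=\int_{-b}^{b}\frac{\cos^3\varphi}{\sqrt{\cos^4\varphi-\cos^4b}}\,d\varphi$. *)

(* Defs.v *)
From Stdlib Require Import Reals.
Open Scope R_scope.

Definition improper_integral (f : R -> R) (a b l : R) : Prop :=
  forall eps : R, 0 < eps ->
    exists delta : R, 0 < delta /\
      forall c d : R, a < c < a + delta -> b - delta < d < b -> c < d ->
        exists pr : Riemann_integrable f c d, Rabs (RiemannInt pr - l) < eps.

Definition integrand1 (b : R) (phi : R) : R :=
  cos phi ^ 5 / sqrt (cos phi ^ 4 - cos b ^ 4).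
Definition integrand2 (b : R) (phi : R) : R :=
  cos phi ^ 3 / sqrt (cos phi ^ 4 - cos b ^ 4).

(* Main.v *)
Require Import Defs.
From Stdlib Require Import Reals Lra Lia List.
From Coquelicot Require Import Coquelicot.
Import ListNotations.
Open Scope R_scope.

Definition Qcoefs : list R := [(9159838761/40000000000); (434453281067/40000000000); (1384769468259/8000000000); (12269357007083/8000000000); (7329953075243/800000000); (20446334982511/500000000); (56606114422/390625); (2117167818959/5000000); (834826484477481/800000000); (1755622959997203/800000000); (632739934955359/160000000); (976631983978791/160000000); (643737272932747/80000000); (180502373163307/20000000); (68607314040563/8000000); (439857434819/64000); (59153432907337/12800000); (33166209798699/12800000); (3076836192123/2560000); (46753433147/102400); (35886627831/256000); (2186795167/64000); (20606687/3200); (717367/800); (8377/100); 4].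

Fixpoint bs (l : list R) (k n : nat) (a : R) : R :=
  match l with
  | nil => 0
  | c :: l' => c * a ^ k * (1 - a) ^ (n - k) + bs l' (S k) n a
  end.

Lemma bs_pos l k n a : 0 < a < 1 -> List.Forall (fun c => 0 < c) l -> l <> nil -> 0 < bs l k n a.
Proof.
  intros Ha Hl; revert k; induction Hl as [|c l' Hc Hl' IH]; intros k Hne; [congruence|].
  simpl. assert (0 < c * a ^ k * (1 - a) ^ (n - k)).
  { apply Rmult_lt_0_compat; [apply Rmult_lt_0_compat; [lra| apply pow_lt; lra] | apply pow_lt; lra]. }
  destruct l' as [|c' l''].
  - simpl; lra.
  - specialize (IH (S k) ltac:(discriminate)); lra.
Qed.

Definition nup (a : R) := (3 + 2*a)/5.
Definition alp (a : R) := 1 + 2*(1-a)^2.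
Definition bep (a : R) := 8/5*(1-a)^2.
Definition EU (a : R) := a^2 + a*(1-a) + 3/8*(1-a)^2 + 2*nup a^2*((1-a)/2 + a/4 + a^2/(2*(1+a))).
Definition EBg (a t al be : R) :=
  (3*a*al + (-1)*a^2*al^3)
  + 1/2 * (3*t*al + (-3)*a*be + (-3/2)*a*t*al^3 + 3*a^2*al^2*be)
  + 3/8 * ((-3)*t*be + (-1/2)*t^2*al^3 + (9/2)*a*t*al^2*be + (-3)*a^2*al*be^2)
  + 5/16 * ((3/2)*t^2*al^2*be + (-9/2)*a*t*al*be^2 + 1*a^2*be^3)
  + 35/128 * ((-3/2)*t^2*al*be^2 + (3/2)*a*t*be^3)
  + 63/256 * ((1/2)*t^2*be^3).
Definition EB (a : R) := EBg a (1-a) (alp a) (bep a).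

Lemma final_ineq a : 0 < a < 1 -> 4 * EU a < nup a * EB a ^ 3.
Proof.
  intros Ha.
  assert (E : (1+a) * (nup a * EB a ^ 3 - 4 * EU a) = (1 - a) * bs Qcoefs 0 25 a).
  { unfold EB, EBg, EU, nup, alp, bep, Qcoefs. cbn [bs Nat.sub]. field. lra. }
  assert (0 < bs Qcoefs 0 25 a).
  { apply bs_pos; [lra| |discriminate]. unfold Qcoefs. repeat constructor; lra. }
  assert (0 < (1 - a) * bs Qcoefs 0 25 a) by (apply Rmult_lt_0_compat; lra).
  rewrite <- E in H0. 
  assert (0 < nup a * EB a ^ 3 - 4 * EU a).
  { apply (Rmult_lt_reg_l (1+a)); lra. }
  lra.
Qed.

Lemma cont_of_der (f : R -> R) x : ex_derive f x -> continuous f x.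
Proof. apply (ex_derive_continuous (K:=R_AbsRing) (V:=R_NormedModule)). Qed.

Fixpoint mm (k : nat) : R :=
  match k with O => 1 | S k' => mm k' * (2 * INR k' + 1) / (2 * INR k' + 2) end.

Lemma mom k : is_RInt (fun x => (cos x ^ 2) ^ k) (-(PI/2)) (PI/2) (PI * mm k).
Proof.
  induction k as [|k IH].
  - simpl. 
    replace (PI * 1) with (scal (PI/2 - - (PI/2)) 1).
    2:{ unfold scal; simpl; unfold mult; simpl. field. }
    exact (is_RInt_const (V:=R_CompleteNormedModule) _ _ 1).
  - set (D := fun x => cos x ^ (2*k+1) * sin x).
    set (D' := fun x => (2*INR k + 2) * (cos x ^2)^(S k) - (2*INR k+1) * (cos x ^ 2)^k).
    assert (HD : is_RInt D' (-(PI/2)) (PI/2) 0).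
    { replace 0 with (minus (D (PI/2)) (D (-(PI/2)))).
      2:{ unfold D, minus, plus, opp; simpl. rewrite cos_neg, cos_PI2. rewrite pow_i; [ring|lia]. }
      apply (is_RInt_derive (V:=R_CompleteNormedModule) D D').
      - intros x _. unfold D, D'. auto_derive; [easy|].
        replace (k + (k + 0) + 1)%nat with (S (2*k)) by lia.
        cbn [Init.Nat.pred]. rewrite S_INR, mult_INR. simpl INR.
        rewrite <- !pow_mult. replace (2 * S k)%nat with (S (S (2*k))) by lia.
        assert (Hs : sin x * sin x = 1 - cos x * cos x) by (pose proof (sin2_cos2 x); unfold Rsqr in *; lra).
        cbn [pow]. set (p := cos x ^ (2*k)).
        apply Rminus_diag_uniq.
        transitivity ((-((1+1)*INR k+1)*p) * (sin x*sin x - (1 - cos x*cos x))); [ring| rewrite Hs; ring].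
      - intros x _. unfold D'. apply cont_of_der. auto_derive. easy. }
    assert (H2 := is_RInt_plus _ _ _ _ _ _ HD (is_RInt_scal _ _ _ (2*INR k+1) _ IH)).
    assert (H3 := is_RInt_scal _ _ _ (/(2*INR k+2)) _ H2).
    assert (Hk : 0 < 2 * INR k + 2) by (pose proof (pos_INR k); lra).
    eapply is_RInt_ext; [|replace (PI * mm (S k)) with (scal (/ (2 * INR k + 2)) (plus 0 (scal (2 * INR k + 1) (PI * mm k)))); [exact H3|]].
    + intros x _. unfold D', scal, plus; simpl; unfold mult; simpl. field. lra.
    + unfold scal, plus; simpl; unfold mult; simpl. field. lra.
Qed.

Fixpoint pe (l : list R) (k : nat) (y : R) : R :=
  match l with nil => 0 | c :: l' => c * y ^ k + pe l' (S k) y end.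
Fixpoint me (l : list R) (k : nat) : R :=
  match l with nil => 0 | c :: l' => c * mm k + me l' (S k) end.

Lemma pe_int l k : is_RInt (fun x => pe l k (cos x ^ 2)) (-(PI/2)) (PI/2) (PI * me l k).
Proof.
  revert k; induction l as [|c l IH]; intros k; simpl.
  - replace (PI * 0) with (scal (PI/2 - - (PI/2)) 0).
    2:{ unfold scal; simpl; unfold mult; simpl. ring. }
    exact (is_RInt_const (V:=R_CompleteNormedModule) _ _ 0).
  - assert (H := is_RInt_plus _ _ _ _ _ _ (is_RInt_scal _ _ _ c _ (mom k)) (IH (S k))).
    replace (PI * (c * mm k + me l (S k))) with (plus (scal c (PI * mm k)) (PI * me l (S k))).
    2:{ unfold scal, plus; simpl; unfold mult; simpl. ring. }
    eapply is_RInt_ext; [|exact H].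
    intros x _. unfold scal, plus; simpl; unfold mult; simpl. reflexivity.
Qed.

Lemma le_sub a b : 0 <= b - a -> a <= b.
Proof. lra. Qed.

Lemma up_help G q nu X : 0 < q -> 0 < nu -> 0 <= G -> G <= q^2 * X -> G / q <= (G + nu^2 * X) / (2*nu).
Proof.
  intros Hq Hn HG HX.
  assert (G / q <= (G + nu^2 * (G / q^2)) / (2*nu)).
  { apply le_sub.
    replace ((G + nu ^ 2 * (G / q ^ 2)) / (2 * nu) - G / q) with (G * (q - nu)^2 / (2*nu*q^2)) by (field; lra).
    apply Rmult_le_pos; [apply Rmult_le_pos; [lra| apply pow2_ge_0]|].
    apply Rlt_le, Rinv_0_lt_compat. apply Rmult_lt_0_compat; [lra| apply pow_lt; lra]. }
  assert (G / q^2 <= X).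
  { apply (Rmult_le_reg_l (q^2)); [apply pow_lt; lra|]. field_simplify; [lra|lra]. }
  assert (nu^2 * (G / q^2) <= nu^2 * X) by (apply Rmult_le_compat_l; [apply pow2_ge_0| lra]).
  assert ((G + nu ^ 2 * (G / q ^ 2)) / (2 * nu) <= (G + nu^2 * X) / (2*nu)).
  { unfold Rdiv; apply Rmult_le_compat_r; [apply Rlt_le, Rinv_0_lt_compat; lra| lra]. }
  lra.
Qed.

Lemma low_help G q r : 0 < q -> 0 <= r -> 0 <= G -> G * r * (3 - q^2 * r^2) / 2 <= G / q.
Proof.
  intros Hq Hr HG. apply le_sub.
  replace (G / q - G * r * (3 - q ^ 2 * r ^ 2) / 2) with (G * (r*q - 1)^2 * (r*q+2) / (2*q)) by (field; lra).
  apply Rmult_le_pos.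
  - apply Rmult_le_pos; [apply Rmult_le_pos; [lra|apply pow2_ge_0]|]. nra.
  - apply Rlt_le, Rinv_0_lt_compat; lra.
Qed.

Lemma chord_help a y : 0 < a < 1 -> 0 <= y <= 1 ->
  a^2 <= (2*a + (1-a)*y) * (a*(1-y)/2 + a^2*y/(1+a)).
Proof.
  intros Ha Hy.
  replace ((2*a + (1-a)*y) * (a*(1-y)/2 + a^2*y/(1+a))) with
    (a^2 * ((1-y)^2 + y^2 + y*(1-y)*((1+a)/(2*a) + (2*a)/(1+a)))) by (field; lra).
  assert (H : 2 <= (1+a)/(2*a) + (2*a)/(1+a)).
  { apply le_sub.
    replace ((1+a)/(2*a) + (2*a)/(1+a) - 2) with ((1+a - 2*a)^2/((2*a)*(1+a))) by (field; lra).
    apply Rmult_le_pos; [apply pow2_ge_0|]. apply Rlt_le, Rinv_0_lt_compat. nra. }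
  assert (0 <= y*(1-y)) by nra.
  assert (y*(1-y)*2 <= y*(1-y)*((1+a)/(2*a) + (2*a)/(1+a))) by (apply Rmult_le_compat_l; lra).
  replace (a^2) with (a^2 * 1) at 1 by ring.
  apply Rmult_le_compat_l; [apply pow2_ge_0|lra].
Qed.

Definition gg a y := a + (1-a)*y.
Definition zz a y := 2*a + (1-a)*y.
Definition Ub a y := (gg a y ^2 + 2*nup a^2 * ((1-a)*y + a*(1-y)/2 + a^2*y/(1+a))) / (2*sqrt 2 * nup a).
Definition Lb a y := gg a y * (alp a - bep a * y) * (3 - zz a y * (alp a - bep a*y)^2/2) / (2*sqrt 2).

Lemma sqrt2_sq : sqrt 2 ^ 2 = 2.
Proof. simpl. rewrite Rmult_1_r. apply sqrt_sqrt. lra. Qed.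
Lemma sqrt2_pos : 0 < sqrt 2.
Proof. apply sqrt_lt_R0. lra. Qed.

Lemma zz_pos a y : 0 < a < 1 -> 0 <= y -> 0 < zz a y.
Proof. intros; unfold zz; nra. Qed.

Lemma ub_pt a y : 0 < a < 1 -> 0 <= y <= 1 -> gg a y ^ 2 / sqrt (zz a y) <= Ub a y.
Proof.
  intros Ha Hy.
  assert (Hz := zz_pos a y Ha (proj1 Hy)).
  assert (Hq : 0 < sqrt (zz a y)) by (apply sqrt_lt_R0; lra).
  assert (Hq2 : sqrt (zz a y) ^ 2 = zz a y) by (simpl; rewrite Rmult_1_r; apply sqrt_sqrt; lra).
  assert (Hn : 0 < nup a) by (unfold nup; lra).
  assert (Hs := sqrt2_pos). assert (Hs2 := sqrt2_sq).
  replace (Ub a y) with ((gg a y ^ 2 + (sqrt 2 * nup a)^2 * ((1-a)*y + a*(1-y)/2 + a^2*y/(1+a))) / (2 * (sqrt 2 * nup a))).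
  2:{ unfold Ub. rewrite Rpow_mult_distr, Hs2. field. lra. }
  apply up_help; [lra| nra | apply pow2_ge_0 |].
  rewrite Hq2.
  pose proof (chord_help a y Ha Hy).
  unfold gg, zz in *. nra.
Qed.

Lemma lb_pt a y : 0 < a < 1 -> 0 <= y <= 1 -> Lb a y <= gg a y / sqrt (zz a y).
Proof.
  intros Ha Hy.
  assert (Hz := zz_pos a y Ha (proj1 Hy)).
  assert (Hq : 0 < sqrt (zz a y)) by (apply sqrt_lt_R0; lra).
  assert (Hq2 : sqrt (zz a y) ^ 2 = zz a y) by (simpl; rewrite Rmult_1_r; apply sqrt_sqrt; lra).
  assert (Hs := sqrt2_pos). assert (Hs2 := sqrt2_sq).
  assert (Hr : 0 <= alp a - bep a * y).
  { unfold alp, bep. assert (0 <= (1-a)^2) by apply pow2_ge_0. nra. }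
  replace (Lb a y) with (gg a y * ((alp a - bep a * y)/sqrt 2) * (3 - sqrt (zz a y)^2 * ((alp a - bep a * y)/sqrt 2)^2) / 2).
  2:{ unfold Lb. rewrite Hq2. unfold Rdiv at 3. rewrite Rpow_mult_distr, pow_inv, Hs2. field. lra. }
  apply low_help; [lra| |].
  - apply Rmult_le_pos; [lra| apply Rlt_le, Rinv_0_lt_compat; lra].
  - unfold gg; nra.
Qed.

Ltac req := match goal with |- @eq _ ?A ?B => change (@eq R A B) end.

Definition h1 a x := gg a (cos x ^ 2) ^ 2 / sqrt (zz a (cos x ^ 2)).
Definition h2 a x := gg a (cos x ^ 2) / sqrt (zz a (cos x ^ 2)).

Lemma zz_cos_pos a x : 0 < a < 1 -> 0 < 2*a + (1-a) * cos x ^ 2.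
Proof. intros. assert (0 <= cos x ^ 2) by apply pow2_ge_0. nra. Qed.

Lemma h1_der a x : 0 < a < 1 -> ex_derive (h1 a) x.
Proof.
  intros Ha. unfold h1, gg, zz. pose proof (zz_cos_pos a x Ha).
  auto_derive. split; [lra|]. split; [|easy]. apply Rgt_not_eq, sqrt_lt_R0; lra.
Qed.
Lemma h2_der a x : 0 < a < 1 -> ex_derive (h2 a) x.
Proof.
  intros Ha. unfold h2, gg, zz. pose proof (zz_cos_pos a x Ha).
  auto_derive. split; [lra|]. split; [|easy]. apply Rgt_not_eq, sqrt_lt_R0; lra.
Qed.

Lemma int_Ub a : 0 < a < 1 ->
  is_RInt (fun x => Ub a (cos x ^ 2)) (-(PI/2)) (PI/2) (PI * EU a / (2 * sqrt 2 * nup a)).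
Proof.
  intros Ha. assert (Hn : 0 < nup a) by (unfold nup; lra). assert (Hs := sqrt2_pos).
  set (D := 2 * sqrt 2 * nup a).
  assert (HD : 0 < D) by (unfold D; nra).
  set (l := [(a^2 + nup a^2 * a)/D; (2*a*(1-a) + 2*nup a^2*((1-a) - a/2 + a^2/(1+a)))/D; (1-a)^2/D]).
  replace (PI * EU a / D) with (PI * me l 0).
  2:{ unfold l, me, EU, D; simpl. field. repeat split; lra. }
  eapply is_RInt_ext; [|apply pe_int].
  intros x _. unfold l, pe, Ub, gg, D. req. field. split; lra.
Qed.

Lemma int_Lb a : 0 < a < 1 ->
  is_RInt (fun x => Lb a (cos x ^ 2)) (-(PI/2)) (PI/2) (PI * EB a / (2 * sqrt 2)).
Proof.
  intros Ha. assert (Hs := sqrt2_pos).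
  set (D := 2 * sqrt 2).
  assert (HD : 0 < D) by (unfold D; nra).
  set (al := alp a). set (be := bep a). set (t := 1 - a).
  set (l := [(3*a*al + (-1)*a^2*al^3)/D;
   (3*t*al + (-3)*a*be + (-3/2)*a*t*al^3 + 3*a^2*al^2*be)/D;
   ((-3)*t*be + (-1/2)*t^2*al^3 + (9/2)*a*t*al^2*be + (-3)*a^2*al*be^2)/D;
   ((3/2)*t^2*al^2*be + (-9/2)*a*t*al*be^2 + 1*a^2*be^3)/D;
   ((-3/2)*t^2*al*be^2 + (3/2)*a*t*be^3)/D;
   ((1/2)*t^2*be^3)/D]).
  replace (PI * EB a / D) with (PI * me l 0).
  2:{ unfold l, me, EB, EBg, D; fold al be t; simpl. field. lra. }
  eapply is_RInt_ext; [|apply pe_int].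
  intros x _. unfold l, pe, Lb, gg, zz, D. fold al be t. req. field. lra.
Qed.

Lemma cos2_01 x : 0 <= cos x ^ 2 <= 1.
Proof. pose proof (sin2_cos2 x). unfold Rsqr in H. split; [apply pow2_ge_0|]. simpl. nra. Qed.

Lemma PI2_le : -(PI/2) <= PI/2.
Proof. pose proof PI_RGT_0; lra. Qed.

Lemma I1_bound a : 0 < a < 1 -> RInt (h1 a) (-(PI/2)) (PI/2) <= PI * EU a / (2 * sqrt 2 * nup a).
Proof.
  intros Ha. rewrite <- (is_RInt_unique _ _ _ _ (int_Ub a Ha)).
  apply RInt_le.
  - apply PI2_le.
  - apply (ex_RInt_continuous (V:=R_CompleteNormedModule)). intros; apply cont_of_der, h1_der, Ha.
  - eexists; apply int_Ub, Ha.
  - intros x _. apply ub_pt; [exact Ha| apply cos2_01].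
Qed.

Lemma I2_bound a : 0 < a < 1 -> PI * EB a / (2 * sqrt 2) <= RInt (h2 a) (-(PI/2)) (PI/2).
Proof.
  intros Ha. rewrite <- (is_RInt_unique _ _ _ _ (int_Lb a Ha)).
  apply RInt_le.
  - apply PI2_le.
  - eexists; apply int_Lb, Ha.
  - apply (ex_RInt_continuous (V:=R_CompleteNormedModule)). intros; apply cont_of_der, h2_der, Ha.
  - intros x _. apply lb_pt; [exact Ha| apply cos2_01].
Qed.

Lemma main_ineq a : 0 < a < 1 ->
  PI ^ 2 * (RInt (h1 a) (-(PI/2)) (PI/2) / RInt (h2 a) (-(PI/2)) (PI/2) ^ 3) < 2.
Proof.
  intros Ha.
  pose proof (I1_bound a Ha) as H1. pose proof (I2_bound a Ha) as H2.
  pose proof (final_ineq a Ha) as HF.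
  set (I1 := RInt (h1 a) (-(PI/2)) (PI/2)) in *.
  set (I2 := RInt (h2 a) (-(PI/2)) (PI/2)) in *.
  assert (Hn : 0 < nup a) by (unfold nup; lra). assert (Hs := sqrt2_pos). assert (Hs2 := sqrt2_sq).
  assert (HPI := PI_RGT_0).
  assert (HEU : 0 < EU a).
  { unfold EU. assert (0 < a^2/(2*(1+a))) by (apply Rdiv_lt_0_compat; nra). nra. }
  assert (HEB : 0 < EB a).
  { destruct (Rle_or_lt (EB a) 0) as [Hle|]; [|easy].
    assert (EB a ^ 3 <= 0) by (replace (EB a ^3) with (EB a * EB a ^2) by ring; assert (0 <= EB a ^2) by apply pow2_ge_0; nra).
    nra. }
  set (L := PI * EB a / (2 * sqrt 2)) in *.
  assert (HL : 0 < L) by (unfold L; apply Rdiv_lt_0_compat; nra).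
  assert (HI2 : 0 < I2) by lra.
  assert (L ^ 3 <= I2 ^ 3) by (apply pow_incr; lra).
  assert (Hgoal : PI ^ 2 * I1 < 2 * L ^ 3).
  { apply Rle_lt_trans with (PI ^ 2 * (PI * EU a / (2 * sqrt 2 * nup a))).
    - apply Rmult_le_compat_l; [apply pow2_ge_0| exact H1].
    - unfold L. 
      replace (2 * (PI * EB a / (2 * sqrt 2)) ^ 3) with (PI^3 * (nup a * EB a ^3) / (8 * sqrt 2 * nup a)).
      2:{ unfold Rdiv. rewrite !Rpow_mult_distr, pow_inv.
          rewrite Rpow_mult_distr. replace (sqrt 2 ^ 3) with (sqrt 2 ^ 2 * sqrt 2) by ring. rewrite Hs2. field. lra. }
      replace (PI ^ 2 * (PI * EU a / (2 * sqrt 2 * nup a))) with (PI^3 * (4 * EU a) / (8 * sqrt 2 * nup a)) by (field; lra).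
      unfold Rdiv. apply Rmult_lt_compat_r.
      + apply Rinv_0_lt_compat. nra.
      + apply Rmult_lt_compat_l; [apply pow_lt; lra| exact HF]. }
  assert (HI23 : 0 < I2 ^ 3) by (apply pow_lt; lra).
  apply (Rmult_lt_reg_r (I2 ^ 3)); [exact HI23|].
  replace (PI ^ 2 * (I1 / I2 ^ 3) * I2 ^ 3) with (PI ^ 2 * I1) by (field; lra). lra.
Qed.


Lemma cont_eps (f : R -> R) x : continuous f x ->
  forall eps, 0 < eps -> exists d, 0 < d /\ forall y, Rabs (y - x) < d -> Rabs (f y - f x) < eps.
Proof.
  intros Hc eps He.
  apply continuity_pt_filterlim in Hc.
  destruct (proj1 (continuity_pt_locally f x) Hc (mkposreal eps He)) as [d Hd].
  exists d. split; [apply cond_pos|].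
  intros y Hy. apply Hd. exact Hy.
Qed.

Lemma asin_cont1 eta : 0 < eta -> exists d, 0 < d /\ forall u, 1 - d < u <= 1 -> PI/2 - eta < asin u.
Proof.
  intros He. pose proof PI_RGT_0 as HPI.
  set (e := Rmin eta (PI/2)).
  assert (He1 : 0 < e) by (unfold e; apply Rmin_glb_lt; lra).
  assert (He2 : e <= eta) by apply Rmin_l.
  assert (He3 : e <= PI/2) by apply Rmin_r.
  set (x0 := PI/2 - e/2).
  assert (Hs : sin x0 < 1).
  { rewrite <- sin_PI2. apply sin_increasing_1; unfold x0; lra. }
  assert (Hs0 : 0 < sin x0) by (apply sin_gt_0; unfold x0; lra).
  exists (1 - sin x0). split; [lra|].
  intros u Hu.
  destruct (Rle_or_lt (asin u) x0) as [Hle|Hlt]; [|unfold x0 in Hlt; lra].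
  exfalso.
  assert (Hb := asin_bound u).
  assert (sin (asin u) <= sin x0).
  { destruct (Req_dec (asin u) x0) as [E|E]; [rewrite E; lra|].
    apply Rlt_le, sin_increasing_1; unfold x0 in *; lra. }
  rewrite sin_asin in H by lra. lra.
Qed.

Lemma GL (f F : R -> R) a0 b0 La Lb : a0 < b0 ->
  (forall x, a0 < x < b0 -> is_derive F x (f x)) ->
  (forall x, a0 < x < b0 -> continuous f x) ->
  (forall eps, 0 < eps -> exists d, 0 < d /\ forall x, b0 - d < x < b0 -> Rabs (F x - Lb) < eps) ->
  (forall eps, 0 < eps -> exists d, 0 < d /\ forall x, a0 < x < a0 + d -> Rabs (F x - La) < eps) ->
  improper_integral f a0 b0 (Lb - La).
Proof.
  intros Hab Hd Hc HB HA eps He.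
  destruct (HB (eps/2) ltac:(lra)) as [d1 [Hd1 H1]].
  destruct (HA (eps/2) ltac:(lra)) as [d2 [Hd2 H2]].
  exists (Rmin d1 d2). split; [apply Rmin_glb_lt; lra|].
  intros c d Hc' Hd' Hcd.
  assert (Hm1 := Rmin_l d1 d2). assert (Hm2 := Rmin_r d1 d2).
  assert (HI : is_RInt f c d (minus (F d) (F c))).
  { apply (is_RInt_derive (V:=R_CompleteNormedModule) F f).
    - intros x Hx. rewrite Rmin_left, Rmax_right in Hx by lra. apply Hd. lra.
    - intros x Hx. rewrite Rmin_left, Rmax_right in Hx by lra. apply Hc. lra. }
  assert (pr : Riemann_integrable f c d) by (apply ex_RInt_Reals_0; eexists; exact HI).
  exists pr. rewrite <- RInt_Reals. rewrite (is_RInt_unique _ _ _ _ HI).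
  unfold minus, plus, opp; simpl.
  specialize (H1 d ltac:(lra)). specialize (H2 c ltac:(lra)).
  replace (F d + - F c - (Lb - La)) with ((F d - Lb) - (F c - La)) by ring.
  eapply Rle_lt_trans; [apply Rabs_triang|]. rewrite Rabs_Ropp. lra.
Qed.

Definition hk a k x := gg a (cos x ^ 2) ^ k / sqrt (zz a (cos x ^ 2)).
Definition HH a k y := RInt (hk a k) 0 y.

Lemma hk_der a k x : 0 < a < 1 -> ex_derive (hk a k) x.
Proof.
  intros Ha. unfold hk, gg, zz. pose proof (zz_cos_pos a x Ha).
  auto_derive. split; [lra|]. split; [|easy]. apply Rgt_not_eq, sqrt_lt_R0; lra.
Qed.

Lemma hk_exRInt a k u v : 0 < a < 1 -> ex_RInt (hk a k) u v.
Proof.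
  intros Ha. apply (ex_RInt_continuous (V:=R_CompleteNormedModule)).
  intros; apply cont_of_der, hk_der, Ha.
Qed.

Lemma HH_der a k y : 0 < a < 1 -> is_derive (HH a k) y (hk a k y).
Proof.
  intros Ha. unfold HH.
  apply (is_derive_RInt (V:=R_CompleteNormedModule) (hk a k) (fun y => RInt (hk a k) 0 y) 0 y).
  - apply filter_forall. intros z. apply RInt_correct, hk_exRInt, Ha.
  - apply cont_of_der, hk_der, Ha.
Qed.

Lemma HH_cont a k y : 0 < a < 1 -> continuous (HH a k) y.
Proof. intros Ha. apply cont_of_der. eexists. apply HH_der, Ha. Qed.

Lemma cos_gt b phi : 0 < b < PI/2 -> -b < phi < b -> cos b < cos phi.
Proof.
  intros Hb Hp. pose proof PI_RGT_0.
  destruct (Rle_or_lt 0 phi).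
  - apply cos_decreasing_1; lra.
  - rewrite <- (cos_neg phi). apply cos_decreasing_1; lra.
Qed.

Lemma scal_R (x y : R) : scal x y = x * y.
Proof. reflexivity. Qed.

Definition Th b phi := asin (sin phi / sin b).

Lemma Th_der b phi : 0 < b < PI/2 -> -b < phi < b ->
  is_derive (Th b) phi (cos phi / sin b * (1 / sqrt (1 - (sin phi / sin b)²))).
Proof.
  intros Hb Hp.
  assert (HS : 0 < sin b) by (apply sin_gt_0; lra).
  assert (Hcb : 0 < cos b) by (apply cos_gt_0; lra).
  assert (Hc := cos_gt b phi Hb Hp).
  assert (Hu : -1 < sin phi / sin b < 1).
  { assert (Hsq : (sin phi / sin b)² < 1).
    { unfold Rsqr. assert (sin phi * sin phi < sin b * sin b).
      { pose proof (sin2_cos2 phi); pose proof (sin2_cos2 b). unfold Rsqr in *. nra. }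
      replace (sin phi / sin b * (sin phi / sin b)) with ((sin phi * sin phi) / (sin b * sin b)) by (field; lra).
      apply (Rmult_lt_reg_r (sin b * sin b)); [nra|]. field_simplify; lra. }
    unfold Rsqr in Hsq. set (u := sin phi / sin b) in *. clearbody u.
    split; destruct (Rle_or_lt u 0); nra. }
  unfold Th.
  apply (is_derive_comp asin (fun x => sin x / sin b) phi).
  - apply is_derive_Reals. apply (derive_pt_eq_1 _ _ _ (derivable_pt_asin _ Hu)).
    apply derive_pt_asin.
  - auto_derive; [lra|]. field. lra.
Qed.

Lemma a_range b : 0 < b < PI/2 -> 0 < cos b ^ 2 < 1.
Proof.
  intros Hb. assert (HS : 0 < sin b) by (apply sin_gt_0; lra).
  assert (Hcb : 0 < cos b) by (apply cos_gt_0; lra).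
  pose proof (sin2_cos2 b). unfold Rsqr in *. simpl. nra.
Qed.

Lemma F_der b k phi : 0 < b < PI/2 -> -b < phi < b ->
  is_derive (fun x => HH (cos b ^ 2) k (Th b x)) phi (cos phi ^ (2*k+1) / sqrt (cos phi ^ 4 - cos b ^ 4)).
Proof.
  intros Hb Hp.
  assert (Ha := a_range b Hb).
  assert (HS : 0 < sin b) by (apply sin_gt_0; lra).
  assert (Hcb : 0 < cos b) by (apply cos_gt_0; lra).
  assert (Hc := cos_gt b phi Hb Hp).
  assert (E := is_derive_comp (HH (cos b ^ 2) k) (Th b) phi _ _ (HH_der _ k (Th b phi) Ha) (Th_der b phi Hb Hp)).
  eapply is_derive_ext; [intros; reflexivity|].
  replace (cos phi ^ (2*k+1) / sqrt (cos phi ^ 4 - cos b ^ 4)) with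
    (scal (cos phi / sin b * (1 / sqrt (1 - (sin phi / sin b)²))) (hk (cos b ^ 2) k (Th b phi))); [exact E|].
  rewrite scal_R.
  pose proof (sin2_cos2 phi) as Ep. pose proof (sin2_cos2 b) as Eb. unfold Rsqr in Ep, Eb.
  set (a := cos b ^ 2) in *. set (c := cos phi) in *. set (S := sin b) in *. set (sp := sin phi) in *.
  assert (HaS : a + S * S = 1) by (unfold a; simpl; lra).
  assert (Hu : -1 <= sp / S <= 1).
  { assert (sp * sp < S * S) by nra.
    assert (Hsq : (sp / S) * (sp / S) < 1).
    { replace (sp / S * (sp / S)) with ((sp * sp) / (S * S)) by (field; lra).
      apply (Rmult_lt_reg_r (S * S)); [nra|]. field_simplify; lra. }
    set (u := sp / S) in *. clearbody u. split; destruct (Rle_or_lt u 0); nra. }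
  unfold hk, Th. fold c sp S. rewrite cos_asin by exact Hu.
  assert (Hca : a < c * c) by (unfold a; simpl; nra).
  assert (Hq1 : 0 <= 1 - (sp / S)²).
  { unfold Rsqr. set (u := sp / S) in *. clearbody u. nra. }
  replace (sqrt (1 - (sp / S)²) ^ 2) with (1 - (sp / S)²) by (simpl; rewrite Rmult_1_r, sqrt_sqrt; lra).
  assert (Eg : gg a (1 - (sp / S)²) = c ^ 2).
  { unfold gg, Rsqr. replace (1 - a) with (S * S) by lra. simpl. field_simplify; [|lra]. lra. }
  assert (Ez : zz a (1 - (sp / S)²) = a + c ^ 2).
  { unfold zz, Rsqr. replace (1 - a) with (S * S) by lra. simpl. field_simplify; [|lra]. lra. }
  rewrite Eg, Ez.
  assert (Hp0 : 0 < sqrt (c^2 - a)) by (apply sqrt_lt_R0; simpl; lra).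
  assert (Hq : 0 < sqrt (a + c^2)) by (apply sqrt_lt_R0; simpl; lra).
  assert (Hp2 : sqrt (c^2 - a) * sqrt (c^2 - a) = c^2 - a) by (apply sqrt_sqrt; simpl; lra).
  assert (Hq2 : sqrt (a + c^2) * sqrt (a + c^2) = a + c^2) by (apply sqrt_sqrt; simpl; lra).
  assert (E1 : sqrt (1 - (sp / S)²) = sqrt (c^2 - a) / S).
  { apply sqrt_lem_1; [lra| apply Rdiv_le_0_compat; lra|].
    unfold Rsqr. field_simplify; [|lra|lra]. replace (sqrt (c^2-a)^2) with (sqrt (c^2-a) * sqrt (c^2-a)) by ring. rewrite Hp2. f_equal. simpl in *; nra. }
  assert (E2 : sqrt (c ^ 4 - cos b ^ 4) = sqrt (c^2 - a) * sqrt (a + c^2)).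
  { apply sqrt_lem_1; [unfold a in *; simpl in *; nra| nra|].
    replace (sqrt (c ^ 2 - a) * sqrt (a + c ^ 2) * (sqrt (c ^ 2 - a) * sqrt (a + c ^ 2))) with
      ((sqrt (c ^ 2 - a) * sqrt (c ^ 2 - a)) * (sqrt (a + c ^ 2) * sqrt (a + c ^ 2))) by ring.
    rewrite Hp2, Hq2. unfold a. ring. }
  rewrite E1, E2, pow_add, pow_mult. req. field. lra.
Qed.

Lemma u_range b phi : 0 < b < PI/2 -> -b < phi < b -> -1 < sin phi / sin b < 1.
Proof.
  intros Hb Hp.
  assert (HS : 0 < sin b) by (apply sin_gt_0; lra).
  assert (Hcb : 0 < cos b) by (apply cos_gt_0; lra).
  assert (Hc := cos_gt b phi Hb Hp).
  assert (Hsq : (sin phi / sin b) * (sin phi / sin b) < 1).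
  { assert (sin phi * sin phi < sin b * sin b).
    { pose proof (sin2_cos2 phi); pose proof (sin2_cos2 b). unfold Rsqr in *. nra. }
    replace (sin phi / sin b * (sin phi / sin b)) with ((sin phi * sin phi) / (sin b * sin b)) by (field; lra).
    apply (Rmult_lt_reg_r (sin b * sin b)); [nra|]. field_simplify; lra. }
  set (u := sin phi / sin b) in *. clearbody u. split; destruct (Rle_or_lt u 0); nra.
Qed.

Lemma Th_lim b eta : 0 < b < PI/2 -> 0 < eta ->
  exists d, 0 < d /\ forall phi, b - d < phi < b -> Rabs (Th b phi - PI/2) < eta.
Proof.
  intros Hb He.
  assert (HS : 0 < sin b) by (apply sin_gt_0; lra).
  destruct (asin_cont1 eta He) as [du [Hdu Hu]].
  assert (Hsc : continuous sin b) by (apply cont_of_der; auto_derive; easy).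
  destruct (cont_eps sin b Hsc (du * sin b) ltac:(nra)) as [d1 [Hd1 H1]].
  exists (Rmin d1 (2*b)). split; [apply Rmin_glb_lt; lra|].
  intros phi Hp. assert (Hm1 := Rmin_l d1 (2*b)). assert (Hm2 := Rmin_r d1 (2*b)).
  assert (Hr := u_range b phi Hb ltac:(lra)).
  specialize (H1 phi ltac:(rewrite Rabs_left; lra)).
  assert (Hlow : 1 - du < sin phi / sin b).
  { apply Rabs_def2 in H1. destruct H1 as [_ H1].
    apply (Rmult_lt_reg_r (sin b)); [lra|]. field_simplify; lra. }
  specialize (Hu (sin phi / sin b) ltac:(lra)).
  assert (Hbd := asin_bound (sin phi / sin b)).
  unfold Th. rewrite Rabs_left1; lra.
Qed.

Lemma improper_k b k : 0 < b < PI/2 ->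
  improper_integral (fun phi => cos phi ^ (2*k+1) / sqrt (cos phi ^ 4 - cos b ^ 4)) (-b) b
    (RInt (hk (cos b ^ 2) k) (-(PI/2)) (PI/2)).
Proof.
  intros Hb. assert (Ha := a_range b Hb).
  assert (HPI := PI_RGT_0).
  set (a := cos b ^ 2) in *.
  replace (RInt (hk a k) (-(PI/2)) (PI/2)) with (HH a k (PI/2) - HH a k (-(PI/2))).
  2:{ unfold HH. rewrite <- (RInt_Chasles (V:=R_CompleteNormedModule) (hk a k) (-(PI/2)) 0 (PI/2)) by (apply hk_exRInt; exact Ha).
      rewrite <- (opp_RInt_swap (V:=R_CompleteNormedModule) (hk a k) (-(PI/2)) 0) by (apply hk_exRInt; exact Ha).
      unfold plus, opp; simpl. ring. }
  apply (GL _ (fun x => HH a k (Th b x))); [lra| | | |].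
  - intros x Hx. apply F_der; [exact Hb| exact Hx].
  - intros x Hx. apply cont_of_der.
    assert (Hc := cos_gt b x Hb Hx). assert (Hcb : 0 < cos b) by (apply cos_gt_0; lra).
    assert (H4 : 0 < cos x ^ 4 - cos b ^ 4).
    { simpl. assert (cos b * cos b < cos x * cos x) by nra. nra. }
    auto_derive. split; [lra|]. split; [|easy]. apply Rgt_not_eq, sqrt_lt_R0; lra.
  - intros eps He.
    destruct (cont_eps _ _ (HH_cont a k (PI/2) Ha) eps He) as [eta [Heta Hh]].
    destruct (Th_lim b eta Hb Heta) as [d [Hd Hth]].
    exists d. split; [exact Hd|]. intros x Hx. apply Hh, Hth, Hx.
  - intros eps He.
    destruct (cont_eps _ _ (HH_cont a k (-(PI/2)) Ha) eps He) as [eta [Heta Hh]].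
    destruct (Th_lim b eta Hb Heta) as [d [Hd Hth]].
    exists d. split; [exact Hd|]. intros x Hx. apply Hh.
    assert (E : Th b x = - Th b (-x)).
    { unfold Th. rewrite sin_neg. replace (- sin x / sin b) with (- (sin x / sin b)) by (field; apply Rgt_not_eq, sin_gt_0; lra).
      rewrite asin_opp. ring. }
    rewrite E. specialize (Hth (-x) ltac:(lra)).
    replace (- Th b (- x) - - (PI / 2)) with (- (Th b (-x) - PI/2)) by ring.
    rewrite Rabs_Ropp. exact Hth.
Qed.

Theorem proposition14 (b : R) (hb : 0 < b < PI / 2) :
  exists I1 I2 : R,
    improper_integral (integrand1 b) (- b) b I1 /\
    improper_integral (integrand2 b) (- b) b I2 /\
    PI ^ 2 * (I1 / I2 ^ 3) < 2.
Proof.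
  assert (Ha := a_range b hb).
  exists (RInt (h1 (cos b ^ 2)) (-(PI/2)) (PI/2)), (RInt (h2 (cos b ^ 2)) (-(PI/2)) (PI/2)).
  split; [|split].
  - exact (improper_k b 2 hb).
  - replace (RInt (h2 (cos b ^ 2)) (-(PI/2)) (PI/2)) with (RInt (hk (cos b ^ 2) 1) (-(PI/2)) (PI/2)).
    + exact (improper_k b 1 hb).
    + apply RInt_ext. intros x _. unfold hk, h2. rewrite pow_1. reflexivity.
  - apply main_ineq, Ha.
Qed.
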